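(* Let $\hat y(x)=\frac1{2\pi}\arg(x)$ on $\Lambda$ and let $f(\xi):=\sum_{b\in\mathcal R_\xi}\psi'(D\hat y_b)$, $\xi\in\Lambda$, be the associated forces. Then $\hat\alpha\in[D\hat y]$ satisfies $\hat\alpha_b\in[-\tfrac13,\tfrac13]$ for all $b\in\mathcal B$, and there is a constant $C$ such that $|f(\xi)|\le C|\xi|^{-3}$ for all $\xi\in\Lambda$. In particular, $|f(\xi)|\le C_1(1+|\xi|)^{-t}$ for some $C_1$ and $t>2$.
   Context: $\mathsf R_6$ rotation by $\pi/3$, $a_1=(1,0)^T$, $a_i=\mathsf R_6^{i-1}a_1$, $\Lambda:=(\tfrac12,\tfrac{\sqrt3}{6})^T+\{ma_1+na_2:m,n\in\mathbb Z\}$. Bonds $\mathcal B=\{(\xi,\eta)\in\Lambda^2:|\xi-\eta|=1\}$ (ordered), $-b=(\eta,\xi)$, $\mathcal R_\xi=\{(\xi,\xi+a_i):i=1,\dots,6\}$, $Dy_b=y(\eta)-y(\xi)$. $[Dy]$ is the set of $\alpha:\mathcal B\to[-\frac12,\frac12]$ with $\alpha_{-b}=-\alpha_b$ and $Dy_b-\alpha_b\in\mathbb Z$. In $\hat y(x)=\frac1{2\pi}\arg(x)$, $x$ is identified with $x_1+ix_2$ and the branch cut is along the positive $x_1$-axis. The potential $\psi\in C(\mathbb R)\cap C^4(\mathbb R\setminus(\mathbb Z+\tfrac12))$ satisfies: ($\psi$1) 1-periodic; ($\psi$2) $\psi$ and $\psi(\tfrac12+\cdot)$ even; ($\psi$3)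 $\psi(r)=0$ iff $r\in\mathbb Z$; ($\psi$4) $\psi''(0)=\mu>0$; ($\psi$5) $\psi(x)\ge\frac12\psi''(0)x^2$ on $[-\frac12,\frac12]$. *)

(* Defs.v *)
From Stdlib Require Import Reals Lra ZArith.
From Coquelicot Require Import Coquelicot.
Open Scope R_scope.

Definition pt := (R * R)%type.

Definition enorm (x : pt) : R := sqrt (fst x ^ 2 + snd x ^ 2).

Definition avec (i : nat) : pt :=
  (cos (INR (i - 1) * PI / 3), sin (INR (i - 1) * PI / 3)).

Definition Lambda (x : pt) : Prop :=
  exists m n : Z,
    x = (1/2 + IZR m * fst (avec 1) + IZR n * fst (avec 2),
         sqrt 3 / 6 + IZR m * snd (avec 1) + IZR n * snd (avec 2)).

Definition ptadd (x y : pt) : pt := (fst x + fst y, snd x + snd y).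
Definition ptsub (x y : pt) : pt := (fst x - fst y, snd x - snd y).

Definition bond (xi eta : pt) : Prop :=
  Lambda xi /\ Lambda eta /\ enorm (ptsub xi eta) = 1.

Definition Dy (y : pt -> R) (xi eta : pt) : R := y eta - y xi.

(* [Dy]: alpha : B -> [-1/2,1/2], alpha_{-b} = -alpha_b, Dy_b - alpha_b in Z.
   alpha is represented as a function on pairs of points; only its values
   on bonds matter. *)
Definition in_class (y : pt -> R) (alpha : pt -> pt -> R) : Prop :=
  forall xi eta, bond xi eta ->
    -1/2 <= alpha xi eta <= 1/2 /\
    alpha eta xi = - alpha xi eta /\
    exists k : Z, Dy y xi eta - alpha xi eta = IZR k.

(* arg(x) in [0, 2 pi), x identified with x1 + i x2, branch cut along the
   positive x1-axis (arg = 0 there). Only used for x <> 0. *)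
Definition arg (x : pt) : R :=
  if Rle_dec 0 (snd x) then acos (fst x / enorm x)
  else 2 * PI - acos (fst x / enorm x).

Definition yhat (x : pt) : R := arg x / (2 * PI).

Definition force (psi : R -> R) (xi : pt) : R :=
  sum_f_R0 (fun j => Derive psi (Dy yhat xi (ptadd xi (avec (S j))))) 5.

Definition potential (psi : R -> R) : Prop :=
  (forall x, continuous psi x) /\
  (forall x, (forall k : Z, x <> IZR k + 1/2) ->
     (forall k, (k <= 4)%nat -> ex_derive_n psi k x) /\
     continuous (Derive_n psi 4) x) /\
  (forall x, psi (x + 1) = psi x) /\
  (forall x, psi (- x) = psi x) /\
             (forall x, psi (1/2 + - x) = psi (1/2 + x)) /\
  (forall r, psi r = 0 <-> exists k : Z, r = IZR k) /\
  Derive_n psi 2 0 > 0 /\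
  (forall x, -1/2 <= x <= 1/2 -> psi x >= 1/2 * Derive_n psi 2 0 * x ^ 2).

(* Main.v *)
Require Import Defs.
From Stdlib Require Import Reals ZArith Lra Lia.
From Coquelicot Require Import Coquelicot.
Open Scope R_scope.

Definition dot (x y : pt) := fst x * fst y + snd x * snd y.
Definition crs (x y : pt) := fst x * snd y - snd x * fst y.
Definition cth (x y : pt) := dot x y / (enorm x * enorm y).
Definition theta (x y : pt) :=
  if Rle_dec 0 (crs x y) then acos (cth x y) else - acos (cth x y).
Definition alpha0 (x y : pt) := theta x y / (2 * PI).

Lemma enorm_sq x : enorm x ^ 2 = fst x ^ 2 + snd x ^ 2.
Proof. unfold enorm. apply pow2_sqrt. nra. Qed.

Lemma enorm_ge0 x : 0 <= enorm x.
Proof. apply sqrt_pos. Qed.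

Lemma sqrt_sq_abs u : sqrt (u²) = Rabs u.
Proof. apply sqrt_Rsqr_abs. Qed.

Lemma arg_cs x : 0 < enorm x ->
  cos (arg x) = fst x / enorm x /\ sin (arg x) = snd x / enorm x.
Proof.
  intro Hn. pose proof (enorm_sq x) as Hs.
  set (n := enorm x) in *. destruct x as [x1 x2]; cbn [fst snd] in *.
  assert (Hu : -1 <= x1 / n <= 1).
  { assert ((x1 / n) ^ 2 <= 1).
    { replace ((x1/n)^2) with (x1^2 / n^2) by (field; lra).
      apply Rmult_le_reg_r with (n^2). nra. field_simplify; nra. }
    nra. }
  assert (Hsin : sin (acos (x1 / n)) = Rabs (x2 / n)).
  { rewrite sin_acos by auto. rewrite <- sqrt_sq_abs. f_equal.
    unfold Rsqr.
    assert (E: (x1/n)*(x1/n) + (x2/n)*(x2/n) = 1).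
    { replace ((x1/n)*(x1/n)+(x2/n)*(x2/n)) with ((x1^2+x2^2)/n^2) by (field; lra).
      rewrite <- Hs. field; lra. }
    lra. }
  unfold arg; cbn [fst snd]. fold n.
  destruct (Rle_dec 0 x2).
  - rewrite cos_acos by auto. rewrite Hsin. split; auto.
    apply Rabs_pos_eq. apply Rmult_le_pos; auto. left; apply Rinv_0_lt_compat; auto.
  - rewrite cos_minus, sin_minus, cos_2PI, sin_2PI, cos_acos, Hsin by auto.
    rewrite Rabs_left. split; lra.
    assert (0 < / n) by (apply Rinv_0_lt_compat; auto).
    unfold Rdiv. nra.
Qed.

Lemma lagrange x y : dot x y ^ 2 + crs x y ^ 2 = enorm x ^ 2 * enorm y ^ 2.
Proof. rewrite !enorm_sq. unfold dot, crs. ring. Qed.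

Lemma theta_cs x y : 0 < enorm x -> 0 < enorm y ->
  -1 <= cth x y <= 1 /\
  cos (theta x y) = cth x y /\ sin (theta x y) = crs x y / (enorm x * enorm y).
Proof.
  intros Hx Hy. pose proof (lagrange x y) as L.
  assert (Hp : 0 < enorm x * enorm y) by nra.
  set (p := enorm x * enorm y) in *.
  assert (Hc2 : 1 - cth x y ^ 2 = (crs x y / p) ^ 2).
  { unfold cth. fold p.
    assert (E: (dot x y/p)^2 + (crs x y/p)^2 = 1).
    { replace ((dot x y/p)^2 + (crs x y/p)^2) with ((dot x y^2+crs x y^2)/p^2) by (field; lra).
      rewrite L. unfold p. field. lra. }
    lra. }
  assert (Hu : -1 <= cth x y <= 1).
  { assert (cth x y ^ 2 <= 1) by nra. nra. }
  split; auto.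
  assert (Hsin : sin (acos (cth x y)) = Rabs (crs x y / p)).
  { rewrite sin_acos by auto. rewrite <- sqrt_sq_abs. f_equal.
    unfold Rsqr. rewrite <- (Rmult_1_r (cth x y)) at 1. simpl in Hc2. lra. }
  unfold theta. fold p.
  assert (0 < / p) by (apply Rinv_0_lt_compat; auto).
  destruct (Rle_dec 0 (crs x y)).
  - rewrite cos_acos, Hsin by auto. split; auto. apply Rabs_pos_eq.
    unfold Rdiv; nra.
  - rewrite cos_neg, sin_neg, cos_acos, Hsin by auto. split; auto.
    rewrite Rabs_left. lra. unfold Rdiv; nra.
Qed.

Lemma same_angle a b : cos a = cos b -> sin a = sin b ->
  exists k : Z, a - b = IZR k * (2 * PI).
Proof.
  intros Hc Hs.
  assert (H1 : cos (a - b) = 1).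
  { rewrite cos_minus, Hc, Hs. pose proof (sin2_cos2 b). unfold Rsqr in H. lra. }
  assert (H2 : sin ((a - b) / 2) = 0).
  { replace (a - b) with (2 * ((a - b) / 2)) in H1 by field.
    rewrite cos_2a_sin in H1. nra. }
  destruct (sin_eq_0_0 _ H2) as [k Hk]. exists k. lra.
Qed.


Lemma sqrt3_sq : sqrt 3 * sqrt 3 = 3.
Proof. apply sqrt_sqrt; lra. Qed.
Lemma sqrt3_pos : 0 < sqrt 3.
Proof. apply sqrt_lt_R0; lra. Qed.

Lemma avec1 : avec 1 = (1, 0).
Proof. unfold avec. replace (INR (1-1) * PI / 3) with 0 by (simpl; lra).
  rewrite cos_0, sin_0; auto. Qed.
Lemma avec2 : avec 2 = (1/2, sqrt 3 / 2).
Proof. unfold avec. replace (INR (2-1) * PI / 3) with (PI/3) by (simpl; lra).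
  rewrite cos_PI3, sin_PI3; auto. Qed.
Lemma avec3 : avec 3 = (-1/2, sqrt 3 / 2).
Proof. unfold avec. replace (INR (3-1) * PI / 3) with (2*(PI/3)) by (simpl; lra).
  rewrite cos_2PI3, sin_2PI3; auto. Qed.
Lemma avec4 : avec 4 = (-1, 0).
Proof. unfold avec. replace (INR (4-1) * PI / 3) with (0 + PI) by (simpl; lra).
  rewrite neg_cos, neg_sin, cos_0, sin_0. f_equal; lra. Qed.
Lemma avec5 : avec 5 = (-1/2, - (sqrt 3 / 2)).
Proof. unfold avec. replace (INR (5-1) * PI / 3) with (PI/3 + PI) by (simpl; lra).
  rewrite neg_cos, neg_sin, cos_PI3, sin_PI3. f_equal; lra. Qed.
Lemma avec6 : avec 6 = (1/2, - (sqrt 3 / 2)).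
Proof. unfold avec. replace (INR (6-1) * PI / 3) with (2*(PI/3) + PI) by (simpl; lra).
  rewrite neg_cos, neg_sin, cos_2PI3, sin_2PI3. f_equal; lra. Qed.

Lemma Lambda_coord x : Lambda x -> exists m n : Z,
  x = (1/2 + IZR m + IZR n / 2, sqrt 3 / 6 + IZR n * sqrt 3 / 2).
Proof.
  intros [m [n E]]. exists m, n. rewrite E, avec1, avec2. cbn [fst snd].
  f_equal; lra.
Qed.

Lemma Lambda_norm x : Lambda x -> 1/3 <= enorm x ^ 2.
Proof.
  intro H. destruct (Lambda_coord x H) as [m [n E]]. rewrite enorm_sq, E. cbn [fst snd].
  assert (Hz : (4 <= 3*((1+2*m+n)*(1+2*m+n)) + (1+3*n)*(1+3*n))%Z).
  { destruct (Z.eq_dec n 0) as [->|Hn].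
    - assert (1 <= (1+2*m)*(1+2*m))%Z by (destruct (Z_le_gt_dec 0 m); nia). lia.
    - assert (4 <= (1+3*n)*(1+3*n))%Z by (destruct (Z_le_gt_dec 0 n); nia).
      assert (0 <= (1+2*m+n)*(1+2*m+n))%Z by apply Z.square_nonneg. lia. }
  apply IZR_le in Hz. rewrite !plus_IZR, !mult_IZR, !plus_IZR, !mult_IZR in Hz.
  replace ((sqrt 3 / 6 + IZR n * sqrt 3 / 2) ^ 2) with
    ((sqrt 3 * sqrt 3) * ((1 + 3 * IZR n) / 6) ^ 2) by field.
  rewrite sqrt3_sq. simpl in Hz. nra.
Qed.

Lemma Lambda_pos x : Lambda x -> 0 < enorm x.
Proof.
  intro H. pose proof (Lambda_norm x H). pose proof (enorm_ge0 x).
  destruct H1; auto. rewrite <- H1 in H0. lra.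
Qed.

Lemma bond_cth x y : bond x y -> -1/2 <= cth x y.
Proof.
  intros [Hx [Hy Hd]].
  pose proof (Lambda_norm x Hx). pose proof (Lambda_norm y Hy).
  pose proof (Lambda_pos x Hx). pose proof (Lambda_pos y Hy).
  assert (Hdot : dot x y = (enorm x ^ 2 + enorm y ^ 2 - 1) / 2).
  { pose proof (enorm_sq (ptsub x y)) as E. rewrite Hd in E.
    rewrite !enorm_sq. unfold dot, ptsub in *. cbn [fst snd] in *. lra. }
  unfold cth. rewrite Hdot.
  set (a := enorm x) in *. set (b := enorm y) in *.
  assert (1/3 <= a * b) by nra.
  apply Rmult_le_reg_r with (a*b). nra.
  field_simplify; [|lra]. nra.
Qed.

Lemma acos_le_2PI3 c : -1/2 <= c <= 1 -> acos c <= 2 * (PI / 3).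
Proof.
  intro H. destruct (Rle_dec (acos c) (2 * (PI / 3))) as [|n]; auto.
  exfalso. apply Rnot_le_lt in n.
  pose proof (acos_bound c). pose proof PI_RGT_0.
  pose proof (cos_decreasing_1 (2*(PI/3)) (acos c) ltac:(lra) ltac:(lra) ltac:(lra) ltac:(lra) n).
  rewrite cos_acos in H2 by lra. rewrite cos_2PI3 in H2. lra.
Qed.


Lemma theta_bound x y : bond x y -> -(2*(PI/3)) <= theta x y <= 2*(PI/3).
Proof.
  intro B. pose proof (bond_cth x y B) as Hc.
  destruct B as [Hx [Hy _]].
  destruct (theta_cs x y (Lambda_pos x Hx) (Lambda_pos y Hy)) as [Hu _].
  pose proof (acos_le_2PI3 (cth x y) ltac:(lra)). pose proof (acos_bound (cth x y)).
  unfold theta. destruct (Rle_dec 0 (crs x y)); lra.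
Qed.

Lemma alpha0_bound x y : bond x y -> -1/3 <= alpha0 x y <= 1/3.
Proof.
  intro B. pose proof (theta_bound x y B). pose proof PI_RGT_0. unfold alpha0.
  split.
  - apply Rmult_le_reg_r with (2*PI). lra. field_simplify; lra.
  - apply Rmult_le_reg_r with (2*PI). lra. field_simplify; lra.
Qed.

Lemma Dy_alpha0 x y : 0 < enorm x -> 0 < enorm y ->
  exists k : Z, Dy yhat x y - alpha0 x y = IZR k.
Proof.
  intros Hx Hy.
  destruct (arg_cs x Hx) as [cx sx]. destruct (arg_cs y Hy) as [cy sy].
  destruct (theta_cs x y Hx Hy) as [_ [ct st]].
  destruct (same_angle (arg y - arg x) (theta x y)) as [k Hk].
  - rewrite cos_minus, cx, cy, sx, sy, ct. unfold cth, dot. field. lra.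
  - rewrite sin_minus, sx, sy, cx, cy, st. unfold crs. field. lra.
  - exists k. unfold Dy, yhat, alpha0. pose proof PI_RGT_0.
    apply Rmult_eq_reg_r with (2*PI); [|lra].
    field_simplify; [|lra]. lra.
Qed.

Lemma alpha0_anti x y : bond x y -> alpha0 y x = - alpha0 x y.
Proof.
  intro B. pose proof (bond_cth x y B) as Hc.
  destruct B as [Hx [Hy _]].
  pose proof (Lambda_pos x Hx). pose proof (Lambda_pos y Hy).
  assert (Ec : cth y x = cth x y) by (unfold cth, dot; f_equal; ring).
  assert (Es : crs y x = - crs x y) by (unfold crs; ring).
  unfold alpha0, theta. rewrite Ec, Es.
  destruct (Rle_dec 0 (crs x y)) as [r|r]; destruct (Rle_dec 0 (- crs x y)) as [r'|r'];
    try (exfalso; lra); try (field; pose proof PI_RGT_0; lra).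
  assert (E0 : crs x y = 0) by lra.
  assert (cth x y = 1).
  { pose proof (lagrange x y) as L. rewrite E0 in L.
    assert (cth x y ^ 2 = 1).
    { unfold cth. replace ((dot x y / (enorm x * enorm y)) ^ 2) with
        (dot x y ^ 2 / (enorm x ^2 * enorm y ^2)) by (field; lra).
      assert (P: 0 < enorm x ^2 * enorm y^2) by (apply Rmult_lt_0_compat; apply pow_lt; lra). rewrite <- L in P. rewrite <- L. field. nra. }
    nra. }
  rewrite H1, acos_1. field. pose proof PI_RGT_0; lra.
Qed.

Lemma part1 : exists alpha, in_class yhat alpha.
Proof.
  exists alpha0. intros x y B. split; [|split].
  - pose proof (alpha0_bound x y B); lra.
  - apply alpha0_anti; auto.
  - destruct B as [Hx [Hy _]]. apply Dy_alpha0; apply Lambda_pos; auto.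
Qed.

Lemma part2 : forall alpha, in_class yhat alpha ->
     forall xi eta, bond xi eta -> -1/3 <= alpha xi eta <= 1/3.
Proof.
  intros alpha Hc x y B. destruct (Hc x y B) as [Hb [_ [k Hk]]].
  pose proof (alpha0_bound x y B).
  destruct B as [Hx [Hy _]].
  destruct (Dy_alpha0 x y (Lambda_pos x Hx) (Lambda_pos y Hy)) as [k' Hk'].
  assert (E : alpha x y - alpha0 x y = IZR (k' - k)) by (rewrite minus_IZR; lra).
  assert (Hlt : -1 < IZR (k' - k) < 1) by lra.
  destruct Hlt as [H1 H2]. apply lt_IZR in H1. apply lt_IZR in H2.
  assert (k' - k = 0)%Z by lia. rewrite H0 in E. simpl in E. lra.
Qed.


Lemma not_half t : Rabs t < 1/2 -> forall k : Z, t <> IZR k + 1/2.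
Proof.
  intros H k E. apply Rabs_def2 in H.
  assert (-1 < IZR k < 0) by lra. destruct H0 as [H1 H2].
  apply lt_IZR in H1. apply lt_IZR in H2. lia.
Qed.

Lemma psi_loc psi : potential psi -> forall c, Rabs c < 1/2 ->
  locally c (fun x0 => forall k, (k <= 4)%nat -> ex_derive_n psi k x0).
Proof.
  intros Hp c Hc. destruct Hp as [_ [H2 _]].
  assert (He : 0 < 1/2 - Rabs c) by lra.
  exists (mkposreal _ He). intros y Hy. change R in y.
  unfold ball in Hy. simpl in Hy. unfold AbsRing_ball, abs, minus, plus, opp in Hy. simpl in Hy.
  apply H2. apply not_half.
  pose proof (Rabs_triang_inv y c). pose proof (Rabs_triang (y - c) c).
  replace (y - c + c) with y in H0 by ring. unfold Rminus in *. lra.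
Qed.

Lemma Dpsi_period psi : potential psi -> forall x, Derive psi (x + 1) = Derive psi x.
Proof.
  intros Hp x. destruct Hp as [_ [_ [Hper _]]].
  pose proof (Derive_n_comp_trans psi 1 x 1) as E.
  change (Derive psi (x + 1) = Derive psi x).
  transitivity (Derive_n psi 1 (x+1)); [reflexivity|]. rewrite <- E.
  simpl. apply Derive_ext. auto.
Qed.

Lemma Dpsi_nat psi : potential psi -> forall n x, Derive psi (x + INR n) = Derive psi x.
Proof.
  intros Hp n. induction n as [|n IH]; intro x.
  - simpl. f_equal. ring.
  - rewrite S_INR. replace (x + (INR n + 1)) with ((x + INR n) + 1) by ring.
    rewrite Dpsi_period; auto.
Qed.

Lemma Dpsi_int psi : potential psi -> forall k x, Derive psi (x + IZR k) = Derive psi x.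
Proof.
  intros Hp k x. destruct k as [|p|p].
  - simpl. f_equal. ring.
  - rewrite <- positive_nat_Z, <- INR_IZR_INZ. apply Dpsi_nat; auto.
  - rewrite <- (Dpsi_nat psi Hp (Pos.to_nat p) (x + IZR (Z.neg p))).
    f_equal. rewrite INR_IZR_INZ, positive_nat_Z. rewrite <- Pos2Z.opp_pos, opp_IZR. ring.
Qed.

Lemma Dpsi_odd psi : potential psi -> forall t, Rabs t < 1/2 ->
  Derive psi (-t) = - Derive psi t.
Proof.
  intros Hp t Ht.
  assert (Hl : locally (-1 * t) (fun x0 => forall k, (k <= 1)%nat -> ex_derive_n psi k x0)).
  { assert (Rabs (-1 * t) < 1/2) by (rewrite Rabs_mult, Rabs_m1; lra).
    generalize (psi_loc psi Hp _ H). apply filter_imp. intros y Hy k Hk. apply Hy; lia. }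
  pose proof (Derive_n_comp_scal psi (-1) 1 t Hl) as E. simpl in E.
  destruct Hp as [_ [_ [_ [Hev _]]]].
  assert (Derive (fun y => psi (-1 * y)) t = Derive psi t).
  { apply Derive_ext. intro u. replace (-1*u) with (-u) by ring. auto. }
  rewrite H in E. replace (-1 * t) with (-t) in E by ring. assert (Derive (fun x : R => psi x) (-t) = Derive psi (-t)) by reflexivity. lra.
Qed.

Lemma Dn_odd0 psi : potential psi -> forall n, (n <= 4)%nat -> Nat.odd n = true ->
  Derive_n psi n 0 = 0.
Proof.
  intros Hp n Hn Ho.
  assert (Hl : locally (-1 * 0) (fun x0 => forall k, (k <= n)%nat -> ex_derive_n psi k x0)).
  { assert (Rabs (-1 * 0) < 1/2) by (rewrite Rmult_0_r, Rabs_R0; lra).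
    generalize (psi_loc psi Hp _ H). apply filter_imp. intros y Hy k Hk. apply Hy; lia. }
  pose proof (Derive_n_comp_scal psi (-1) n 0 Hl) as E.
  destruct Hp as [_ [_ [_ [Hev _]]]].
  rewrite (Derive_n_ext _ psi) in E by (intro u; replace (-1*u) with (-u) by ring; auto).
  replace (-1 * 0) with 0 in E by ring.
  assert ((-1) ^ n = -1).
  { destruct n as [|[|[|[|[|n]]]]]; simpl in *; try discriminate; try lra; lia. }
  rewrite H in E. lra.
Qed.

Lemma Dn_Derive f : forall n x, Derive_n (Derive f) n x = Derive_n f (S n) x.
Proof.
  induction n as [|n IH]; intro x.
  - reflexivity.
  - simpl. apply Derive_ext. intro t. rewrite IH. reflexivity.
Qed.

Lemma exDn_Derive f : forall n x, ex_derive_n f (S n) x -> ex_derive_n (Derive f) n x.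
Proof.
  intros [|n] x H.
  - exact I.
  - simpl in *. eapply ex_derive_ext; [|exact H]. intro t. rewrite Dn_Derive. reflexivity.
Qed.

Lemma D4_bound psi : potential psi -> exists M, 0 <= M /\
  forall t, 0 <= t <= 1/3 -> Rabs (Derive_n psi 4 t) <= M.
Proof.
  intro Hp. pose proof Hp as Hp'. destruct Hp' as [_ [H2 _]].
  assert (Hc : forall c, 0 <= c <= 1/3 -> continuity_pt (Derive_n psi 4) c).
  { intros c Hc. apply continuity_pt_filterlim. apply H2. apply not_half.
    rewrite Rabs_pos_eq; lra. }
  destruct (continuity_ab_maj _ 0 (1/3) ltac:(lra) Hc) as [a [Ha _]].
  destruct (continuity_ab_min _ 0 (1/3) ltac:(lra) Hc) as [b [Hb _]].
  exists (Rabs (Derive_n psi 4 a) + Rabs (Derive_n psi 4 b)). split.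
  - pose proof (Rabs_pos (Derive_n psi 4 a)). pose proof (Rabs_pos (Derive_n psi 4 b)). lra.
  - intros t Ht. specialize (Ha t Ht). specialize (Hb t Ht).
    apply Rabs_le. pose proof (Rabs_pos (Derive_n psi 4 a)). pose proof (Rabs_pos (Derive_n psi 4 b)).
    pose proof (Rle_abs (Derive_n psi 4 a)). pose proof (Rle_abs (- Derive_n psi 4 b)).
    rewrite Rabs_Ropp in H3. lra.
Qed.

Lemma dpsi_est psi : potential psi -> exists M, 0 <= M /\
  forall a, Rabs a <= 1/3 ->
    Rabs (Derive psi a - Derive_n psi 2 0 * a) <= M * Rabs a ^ 3.
Proof.
  intro Hp. destruct (D4_bound psi Hp) as [M [HM HMb]].
  exists M. split; auto.
  assert (Hpos : forall a, 0 < a <= 1/3 ->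
    Rabs (Derive psi a - Derive_n psi 2 0 * a) <= M * a ^ 3).
  { intros a Ha.
    destruct (Taylor_Lagrange (Derive psi) 2 0 a ltac:(lra)) as [z [Hz E]].
    { intros t Ht k Hk. apply exDn_Derive. pose proof Hp as [_ [H2 _]].
      apply H2. apply not_half. rewrite Rabs_pos_eq; lra. lia. }
    rewrite E. cbn [sum_f_R0]. rewrite !Dn_Derive.
    rewrite (Dn_odd0 psi Hp 1), (Dn_odd0 psi Hp 3) by (auto; lia).
    replace (INR (fact 0)) with 1 by reflexivity.
    replace (INR (fact 1)) with 1 by reflexivity.
    replace (INR (fact 2)) with 2 by (simpl; ring).
    replace (INR (fact 3)) with 6 by (simpl; ring).
    match goal with |- Rabs ?e <= _ => replace e with (a^3/6 * Derive_n psi 4 z) end.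
    2:{ field. }
    rewrite Rabs_mult. specialize (HMb z ltac:(lra)).
    assert (0 <= a^3) by (apply pow_le; lra). rewrite (Rabs_pos_eq (a^3/6)) by lra.
    nra. }
  intros a Ha. destruct (Rtotal_order a 0) as [Hn|[H0|Hp0]].
  - rewrite (Rabs_left a) in Ha |- * by lra.
    specialize (Hpos (-a) ltac:(lra)).
    rewrite <- (Ropp_involutive a) at 1. rewrite (Dpsi_odd psi Hp) by (rewrite Rabs_Ropp, Rabs_left; lra).
    replace (- Derive psi (- a) - Derive_n psi 2 0 * a) with
      (- (Derive psi (- a) - Derive_n psi 2 0 * - a)) by ring.
    rewrite Rabs_Ropp. auto.
  - subst. rewrite Rabs_R0. replace (Derive psi 0) with (Derive_n psi 1 0) by reflexivity.
    rewrite (Dn_odd0 psi Hp 1) by (auto; lia). rewrite Rmult_0_r, Rminus_0_r, Rabs_R0.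
    simpl. lra.
  - rewrite (Rabs_pos_eq a) in Ha |- * by lra. apply Hpos; lra.
Qed.


Lemma Lambda_of (m n : Z) : Lambda (1/2 + IZR m + IZR n / 2, sqrt 3 / 6 + IZR n * sqrt 3 / 2).
Proof. exists m, n. rewrite avec1, avec2. cbn [fst snd]. f_equal; field. Qed.

Lemma Lambda_add x k : Lambda x -> (1 <= k <= 6)%nat -> Lambda (ptadd x (avec k)).
Proof.
  intros H Hk. destruct (Lambda_coord x H) as [m [n ->]].
  destruct k as [|[|[|[|[|[|[|k]]]]]]]; try lia.
  - rewrite avec1. unfold ptadd; cbn [fst snd].
    replace (_, _) with (1/2 + IZR (m+1) + IZR n / 2, sqrt 3 / 6 + IZR n * sqrt 3 / 2).
    apply Lambda_of. rewrite plus_IZR. f_equal; simpl; field.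
  - rewrite avec2. unfold ptadd; cbn [fst snd].
    replace (_, _) with (1/2 + IZR m + IZR (n+1) / 2, sqrt 3 / 6 + IZR (n+1) * sqrt 3 / 2).
    apply Lambda_of. rewrite plus_IZR. f_equal; simpl; field.
  - rewrite avec3. unfold ptadd; cbn [fst snd].
    replace (_, _) with (1/2 + IZR (m-1) + IZR (n+1) / 2, sqrt 3 / 6 + IZR (n+1) * sqrt 3 / 2).
    apply Lambda_of. rewrite plus_IZR, minus_IZR. f_equal; simpl; field.
  - rewrite avec4. unfold ptadd; cbn [fst snd].
    replace (_, _) with (1/2 + IZR (m-1) + IZR n / 2, sqrt 3 / 6 + IZR n * sqrt 3 / 2).
    apply Lambda_of. rewrite minus_IZR. f_equal; simpl; field.
  - rewrite avec5. unfold ptadd; cbn [fst snd].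
    replace (_, _) with (1/2 + IZR m + IZR (n-1) / 2, sqrt 3 / 6 + IZR (n-1) * sqrt 3 / 2).
    apply Lambda_of. rewrite minus_IZR. f_equal; simpl; field.
  - rewrite avec6. unfold ptadd; cbn [fst snd].
    replace (_, _) with (1/2 + IZR (m+1) + IZR (n-1) / 2, sqrt 3 / 6 + IZR (n-1) * sqrt 3 / 2).
    apply Lambda_of. rewrite plus_IZR, minus_IZR. f_equal; simpl; field.
Qed.

Lemma avec_unit k : (1 <= k <= 6)%nat -> fst (avec k) ^ 2 + snd (avec k) ^ 2 = 1.
Proof.
  intro Hk. pose proof sqrt3_sq.
  destruct k as [|[|[|[|[|[|[|k]]]]]]]; try lia;
  first [rewrite avec1|rewrite avec2|rewrite avec3|rewrite avec4|rewrite avec5|rewrite avec6];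
  cbn [fst snd]; nra.
Qed.

Lemma bond_add x k : Lambda x -> (1 <= k <= 6)%nat -> bond x (ptadd x (avec k)).
Proof.
  intros H Hk. split; [auto|split]. apply Lambda_add; auto.
  unfold enorm, ptsub, ptadd; cbn [fst snd].
  replace ((fst x - (fst x + fst (avec k))) ^ 2 + (snd x - (snd x + snd (avec k))) ^ 2)
    with (fst (avec k) ^ 2 + snd (avec k) ^ 2) by ring.
  rewrite avec_unit by auto. apply sqrt_1.
Qed.

Lemma force_term psi : potential psi -> forall x k, Lambda x -> (1 <= k <= 6)%nat ->
  Derive psi (Dy yhat x (ptadd x (avec k))) = Derive psi (alpha0 x (ptadd x (avec k))).
Proof.
  intros Hp x k H Hk. pose proof (bond_add x k H Hk) as B.
  destruct B as [Hx [Hy _]].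
  destruct (Dy_alpha0 _ _ (Lambda_pos _ Hx) (Lambda_pos _ Hy)) as [z Hz].
  replace (Dy yhat x (ptadd x (avec k))) with (alpha0 x (ptadd x (avec k)) + IZR z) by lra.
  apply Dpsi_int; auto.
Qed.

Lemma theta_atan x y : 0 < enorm x -> 0 < enorm y -> 0 < dot x y ->
  theta x y = atan (crs x y / dot x y).
Proof.
  intros Hx Hy Hd. destruct (theta_cs x y Hx Hy) as [Hu [Hc Hs]].
  assert (Hp : 0 < enorm x * enorm y) by nra.
  assert (Hct : 0 < cth x y) by (unfold cth; apply Rdiv_lt_0_compat; auto).
  assert (Hac : acos (cth x y) < PI / 2).
  { pose proof (acos_bound (cth x y)). pose proof PI_RGT_0.
    destruct (Rlt_dec (acos (cth x y)) (PI/2)) as [|n]; auto. exfalso.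
    apply Rnot_lt_le in n. destruct n as [n|n].
    - pose proof (cos_decreasing_1 (PI/2) (acos (cth x y)) ltac:(lra) ltac:(lra) ltac:(lra) ltac:(lra) n).
      rewrite cos_acos, cos_PI2 in H1 by lra. lra.
    - pose proof (cos_acos (cth x y) Hu). rewrite <- n, cos_PI2 in H1. lra. }
  assert (Hb : - (PI/2) < theta x y < PI/2).
  { pose proof (acos_bound (cth x y)). pose proof PI_RGT_0.
    unfold theta. destruct (Rle_dec 0 (crs x y)); lra. }
  rewrite <- (atan_tan (theta x y) Hb). f_equal. unfold tan. rewrite Hc, Hs.
  unfold cth. field. lra.
Qed.

Lemma atan_mvt t : exists e, atan t = t - e /\ Rabs e <= Rabs t ^ 3 /\ Rabs (atan t) <= Rabs t.
Proof.
  destruct (MVT_gen atan 0 t (fun c => / (1 + c^2))) as [c [Hc E]].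
  - intros x _. apply is_derive_Reals. apply derivable_pt_lim_atan.
  - intros x _. apply derivable_continuous_pt. apply derivable_pt_atan.
  - rewrite atan_0, !Rminus_0_r in E.
    assert (Hct : c ^ 2 <= t ^ 2).
    { unfold Rmin, Rmax in Hc. destruct (Rle_dec 0 t); nra. }
    assert (Hq : 0 < 1 + c ^ 2) by nra.
    set (w := c^2 / (1 + c^2)).
    assert (Hw : 0 <= w <= t^2).
    { unfold w. split. apply Rdiv_le_0_compat; nra.
      apply Rmult_le_reg_r with (1+c^2); auto. field_simplify; nra. }
    assert (Hw1 : w <= 1).
    { unfold w. apply Rmult_le_reg_r with (1+c^2); auto. field_simplify; nra. }
    exists (t * w). split; [|split].
    + rewrite E. unfold w. field. lra.
    + rewrite Rabs_mult, (Rabs_pos_eq w) by lra.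
      replace (Rabs t ^ 3) with (Rabs t * Rabs t ^ 2) by ring. rewrite pow2_abs.
      pose proof (Rabs_pos t). nra.
    + replace (atan t) with (t * (1 - w)) by (rewrite E; unfold w; field; lra).
      rewrite Rabs_mult, (Rabs_pos_eq (1 - w)) by lra. pose proof (Rabs_pos t). nra.
Qed.


Lemma crs_dot_bound x k : (1 <= k <= 6)%nat ->
  Rabs (crs x (avec k)) <= enorm x /\ Rabs (dot x (avec k)) <= enorm x.
Proof.
  intro Hk. pose proof (lagrange x (avec k)) as L.
  rewrite (enorm_sq (avec k)), avec_unit in L by auto.
  pose proof (enorm_ge0 x).
  split; (apply Rle_trans with (Rabs (enorm x));
    [apply Rsqr_le_abs_0; unfold Rsqr; nra | rewrite Rabs_pos_eq; lra]).
Qed.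

Lemma term_est psi (M : R) (HM : 0 <= M)
  (Hd : forall a, Rabs a <= 1/3 -> Rabs (Derive psi a - Derive_n psi 2 0 * a) <= M * Rabs a ^ 3)
  x k : Lambda x -> (1 <= k <= 6)%nat -> 2 <= enorm x ->
  exists e d,
    Derive psi (alpha0 x (ptadd x (avec k))) =
      Derive_n psi 2 0 * ((crs x (avec k) / (enorm x ^ 2 + dot x (avec k))) - e) / (2 * PI) + d /\
    Rabs (crs x (avec k) / (enorm x ^ 2 + dot x (avec k))) * enorm x <= 2 /\
    Rabs e * enorm x ^ 3 <= 8 /\ Rabs d * enorm x ^ 3 <= 8 * M.
Proof.
  intros Hx Hk Hr.
  set (a := avec k) in *. set (y := ptadd x a).
  set (rho := enorm x) in *.
  assert (Ec : crs x y = crs x a) by (unfold y, crs, ptadd; cbn [fst snd]; ring).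
  assert (Ed : dot x y = rho ^ 2 + dot x a).
  { unfold rho. rewrite enorm_sq. unfold y, dot, ptadd; cbn [fst snd]; ring. }
  destruct (crs_dot_bound x k Hk) as [Hcb Hdb]. fold a rho in Hcb, Hdb.
  apply Rabs_le_between in Hdb.
  assert (Hden : rho ^ 2 / 2 <= rho ^ 2 + dot x a) by nra.
  assert (Hy : Lambda y) by (apply Lambda_add; auto).
  assert (Hth : theta x y = atan (crs x a / (rho ^ 2 + dot x a))).
  { rewrite <- Ec, <- Ed. apply theta_atan; try apply Lambda_pos; auto.
    rewrite Ed. nra. }
  set (t := crs x a / (rho ^ 2 + dot x a)) in *.
  destruct (atan_mvt t) as [e [He [Heb Hat]]].
  assert (Htr : Rabs t * rho <= 2).
  { unfold t. unfold Rdiv. rewrite Rabs_mult, Rabs_inv, (Rabs_pos_eq (rho^2 + dot x a)) by nra.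
    assert (0 < rho ^ 2 + dot x a) by nra.
    apply Rmult_le_reg_r with (rho ^ 2 + dot x a); auto.
    field_simplify; [|lra]. pose proof (Rabs_pos (crs x a)). nra. }
  assert (Ht0 : 0 <= Rabs t) by apply Rabs_pos.
  assert (Hrp : 0 < rho) by lra.
  assert (Hal : alpha0 x y = (t - e) / (2 * PI)) by (unfold alpha0; rewrite Hth, He; auto).
  pose proof PI_RGT_0 as Hpi.
  assert (Haa : Rabs (alpha0 x y) <= Rabs t).
  { unfold alpha0. rewrite Hth. fold t. unfold Rdiv. rewrite Rabs_mult, Rabs_inv.
    rewrite (Rabs_pos_eq (2*PI)) by lra. apply Rmult_le_reg_r with (2*PI). lra.
    rewrite Rmult_assoc, Rinv_l, Rmult_1_r by lra. pose proof PI2_1; nra. }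
  exists e, (Derive psi (alpha0 x y) - Derive_n psi 2 0 * alpha0 x y).
  split; [|split; [auto|split]].
  - rewrite Hal. field. lra.
  - apply Rle_trans with (Rabs t ^ 3 * rho ^ 3).
    + apply Rmult_le_compat_r; auto. apply pow_le; lra.
    + replace (Rabs t ^ 3 * rho ^ 3) with ((Rabs t * rho) ^ 3) by ring.
      replace 8 with (2 ^ 3) by ring. apply pow_incr. split; [nra|auto].
  - assert (Hb : Rabs (alpha0 x y) <= 1/3) by (apply Rabs_le; pose proof (alpha0_bound x y (bond_add x k Hx Hk)); lra).
    specialize (Hd _ Hb).
    apply Rle_trans with (M * Rabs (alpha0 x y) ^ 3 * rho ^ 3).
    + apply Rmult_le_compat_r; auto. apply pow_le; lra.
    + rewrite Rmult_assoc, (Rmult_comm 8 M). apply Rmult_le_compat_l; auto.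
      replace (Rabs (alpha0 x y) ^ 3 * rho ^ 3) with ((Rabs (alpha0 x y) * rho) ^ 3) by ring.
      replace 8 with (2 ^ 3) by ring. apply pow_incr. pose proof (Rabs_pos (alpha0 x y)). split; nra.
Qed.

Lemma pair_bound rho s c : 2 <= rho -> Rabs s <= rho -> Rabs c <= rho ->
  Rabs (s / (rho^2 + c) + (- s) / (rho^2 - c) + 2 * s * c / rho^4) * rho^3 <= 2.
Proof.
  intros Hr Hs Hc. pose proof Hc as Hc0. apply Rabs_le_between in Hc.
  assert (H1 : 0 < rho^2 + c) by nra. assert (H2 : 0 < rho^2 - c) by nra.
  assert (Hr4 : 0 < rho ^ 4) by (apply pow_lt; lra).
  assert (Hc2 : c^2 <= rho^2) by nra.
  assert (Hq : rho^2 >= 4) by nra.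
  assert (Hr44 : rho^4 = rho^2*rho^2) by ring.
  assert (Hcq : 0 < rho^4 - c^2) by nra.
  assert (HD : 0 < rho^4 * (rho^4 - c^2)) by (apply Rmult_lt_0_compat; auto).
  replace (s / (rho^2 + c) + (- s) / (rho^2 - c) + 2 * s * c / rho^4)
    with (- (2 * s * c^3) / (rho^4 * (rho^4 - c^2))) by (field; nra).
  unfold Rdiv. rewrite Rabs_mult, Rabs_inv, Rabs_Ropp, (Rabs_pos_eq (rho^4 * _)) by lra.
  rewrite !Rabs_mult. rewrite (Rabs_pos_eq 2) by lra. rewrite <- RPow_abs.
  assert (Hcc : Rabs c <= rho) by (apply Rabs_le; lra).
  pose proof (Rabs_pos s). pose proof (Rabs_pos c).
  assert (Hc3 : Rabs c ^ 3 <= rho ^ 3) by (apply pow_incr; lra).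
  assert (HN : Rabs s * Rabs c ^ 3 <= rho * rho ^ 3).
  { apply Rmult_le_compat; auto. apply pow_le; auto. }
  assert (HDD : rho ^ 7 <= rho^4 * (rho^4 - c^2)).
  { assert (rho^3 <= rho^4 - rho^2) by nra. nra. }
  set (D := rho ^ 4 * (rho ^ 4 - c ^ 2)) in *.
  assert (0 <= rho ^ 3) by (apply pow_le; lra).
  assert (HK : 2 * Rabs s * Rabs c ^ 3 * rho ^ 3 <= 2 * D).
  { replace (2 * Rabs s * Rabs c ^ 3 * rho ^ 3) with (2 * (Rabs s * Rabs c ^ 3) * rho ^ 3) by ring.
    apply Rle_trans with (2 * (rho * rho ^ 3) * rho ^ 3).
    - apply Rmult_le_compat_r; auto. lra.
    - replace (2 * (rho * rho ^ 3) * rho ^ 3) with (2 * rho ^ 7) by ring. lra. }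
  replace (2 * Rabs s * Rabs c ^ 3 * / D * rho ^ 3) with ((2 * Rabs s * Rabs c ^ 3 * rho ^ 3) / D)
    by (field; lra).
  apply Rmult_le_reg_r with D; auto. unfold Rdiv. rewrite Rmult_assoc, Rinv_l, Rmult_1_r by lra. lra.
Qed.


Lemma absb x r b : 0 < r -> Rabs x * r <= b -> -b <= x * r <= b.
Proof.
  intros Hr H. rewrite <- (Rabs_pos_eq r) in H by lra. rewrite <- Rabs_mult in H.
  apply Rabs_le_between in H. auto.
Qed.

Lemma abs6 a b c d e f : Rabs (a + b + c + d + e + f) <=
  Rabs a + Rabs b + Rabs c + Rabs d + Rabs e + Rabs f.
Proof.
  pose proof (Rabs_triang (a+b+c+d+e) f). pose proof (Rabs_triang (a+b+c+d) e).
  pose proof (Rabs_triang (a+b+c) d). pose proof (Rabs_triang (a+b) c).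
  pose proof (Rabs_triang a b). lra.
Qed.

Lemma crs_dot_opp x :
  crs x (avec 4) = - crs x (avec 1) /\ dot x (avec 4) = - dot x (avec 1) /\
  crs x (avec 5) = - crs x (avec 2) /\ dot x (avec 5) = - dot x (avec 2) /\
  crs x (avec 6) = - crs x (avec 3) /\ dot x (avec 6) = - dot x (avec 3).
Proof.
  rewrite avec1, avec2, avec3, avec4, avec5, avec6. unfold crs, dot; cbn [fst snd].
  repeat split; field.
Qed.

Lemma sc_sum x :
  crs x (avec 1) * dot x (avec 1) + crs x (avec 2) * dot x (avec 2) +
  crs x (avec 3) * dot x (avec 3) = 0.
Proof.
  rewrite avec1, avec2, avec3. unfold crs, dot; cbn [fst snd].
  match goal with |- ?l = 0 => replace l with (fst x * snd x * (sqrt 3 * sqrt 3 - 3) / 2) by field end.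
  rewrite sqrt3_sq. field.
Qed.

Lemma force_expand psi x : potential psi -> Lambda x ->
  force psi x = Derive psi (alpha0 x (ptadd x (avec 1))) + Derive psi (alpha0 x (ptadd x (avec 2)))
    + Derive psi (alpha0 x (ptadd x (avec 3))) + Derive psi (alpha0 x (ptadd x (avec 4)))
    + Derive psi (alpha0 x (ptadd x (avec 5))) + Derive psi (alpha0 x (ptadd x (avec 6))).
Proof.
  intros Hp Hx. unfold force. cbn [sum_f_R0].
  rewrite !(force_term psi Hp x) by (auto; lia). reflexivity.
Qed.

Lemma force_decay psi : potential psi -> exists C, 0 <= C /\
  forall x, Lambda x -> Rabs (force psi x) * enorm x ^ 3 <= C.
Proof.
  intro Hp. destruct (dpsi_est psi Hp) as [M [HM Hd]].
  pose proof Hp as Hp'. destruct Hp' as [_ [_ [_ [_ [_ [_ [Hmu _]]]]]]].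
  set (mu := Derive_n psi 2 0) in *.
  exists (100 * (mu + M)). split; [lra|].
  intros x Hx. rewrite (force_expand psi x Hp Hx).
  set (rho := enorm x).
  assert (Hr0 : 0 < rho) by (apply Lambda_pos; auto).
  assert (Hr3 : 0 < rho ^ 3) by (apply pow_lt; auto).
  destruct (Rlt_dec rho 2) as [Hsm|Hbig].
  -
    assert (Hterm : forall k, (1 <= k <= 6)%nat ->
      Rabs (Derive psi (alpha0 x (ptadd x (avec k)))) <= mu + M).
    { intros k Hk. pose proof (alpha0_bound x _ (bond_add x k Hx Hk)) as Hb.
      set (al := alpha0 x (ptadd x (avec k))) in *.
      assert (Hab : Rabs al <= 1/3) by (apply Rabs_le; lra).
      specialize (Hd al Hab).
      assert (Rabs al ^ 3 <= 1) by (pose proof (Rabs_pos al); nra).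
      pose proof (Rabs_triang (Derive psi al - mu * al) (mu * al)).
      replace (Derive psi al - mu * al + mu * al) with (Derive psi al) in H0 by ring.
      rewrite Rabs_mult, (Rabs_pos_eq mu) in H0 by lra.
      assert (mu * Rabs al <= mu) by (pose proof (Rabs_pos al); nra).
      assert (M * Rabs al ^ 3 <= M) by nra. lra. }
    assert (Hrc : rho ^ 3 <= 8) by (replace 8 with (2^3) by ring; apply pow_incr; lra).
    assert (Hsum : Rabs (Derive psi (alpha0 x (ptadd x (avec 1))) + Derive psi (alpha0 x (ptadd x (avec 2)))
    + Derive psi (alpha0 x (ptadd x (avec 3))) + Derive psi (alpha0 x (ptadd x (avec 4)))
    + Derive psi (alpha0 x (ptadd x (avec 5))) + Derive psi (alpha0 x (ptadd x (avec 6)))) <= 6 * (mu + M)).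
    { pose proof (Hterm 1%nat ltac:(lia)). pose proof (Hterm 2%nat ltac:(lia)).
      pose proof (Hterm 3%nat ltac:(lia)). pose proof (Hterm 4%nat ltac:(lia)).
      pose proof (Hterm 5%nat ltac:(lia)). pose proof (Hterm 6%nat ltac:(lia)).
      eapply Rle_trans; [apply abs6|]. lra. }
    pose proof (Rabs_pos (Derive psi (alpha0 x (ptadd x (avec 1))) + Derive psi (alpha0 x (ptadd x (avec 2)))
    + Derive psi (alpha0 x (ptadd x (avec 3))) + Derive psi (alpha0 x (ptadd x (avec 4)))
    + Derive psi (alpha0 x (ptadd x (avec 5))) + Derive psi (alpha0 x (ptadd x (avec 6))))).
    nra.
  - apply Rnot_lt_le in Hbig.
    destruct (term_est psi M HM Hd x 1 Hx ltac:(lia) Hbig) as [e1 [d1 [E1 [_ [He1 Hd1]]]]].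
    destruct (term_est psi M HM Hd x 2 Hx ltac:(lia) Hbig) as [e2 [d2 [E2 [_ [He2 Hd2]]]]].
    destruct (term_est psi M HM Hd x 3 Hx ltac:(lia) Hbig) as [e3 [d3 [E3 [_ [He3 Hd3]]]]].
    destruct (term_est psi M HM Hd x 4 Hx ltac:(lia) Hbig) as [e4 [d4 [E4 [_ [He4 Hd4]]]]].
    destruct (term_est psi M HM Hd x 5 Hx ltac:(lia) Hbig) as [e5 [d5 [E5 [_ [He5 Hd5]]]]].
    destruct (term_est psi M HM Hd x 6 Hx ltac:(lia) Hbig) as [e6 [d6 [E6 [_ [He6 Hd6]]]]].
    rewrite E1, E2, E3, E4, E5, E6.
    fold rho. fold rho in He1, He2, He3, He4, He5, He6, Hd1, Hd2, Hd3, Hd4, Hd5, Hd6.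
    destruct (crs_dot_opp x) as [C4 [D4 [C5 [D5 [C6 D6]]]]].
    rewrite C4, D4, C5, D5, C6, D6.
    pose proof (sc_sum x) as SC.
    destruct (crs_dot_bound x 1 ltac:(lia)) as [S1 K1].
    destruct (crs_dot_bound x 2 ltac:(lia)) as [S2 K2].
    destruct (crs_dot_bound x 3 ltac:(lia)) as [S3 K3].
    fold rho in S1, K1, S2, K2, S3, K3.
    set (s1 := crs x (avec 1)) in *. set (c1 := dot x (avec 1)) in *.
    set (s2 := crs x (avec 2)) in *. set (c2 := dot x (avec 2)) in *.
    set (s3 := crs x (avec 3)) in *. set (c3 := dot x (avec 3)) in *.
    pose proof (pair_bound rho s1 c1 Hbig S1 K1) as T1.
    pose proof (pair_bound rho s2 c2 Hbig S2 K2) as T2.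
    pose proof (pair_bound rho s3 c3 Hbig S3 K3) as T3.
    set (U1 := s1 / (rho ^ 2 + c1) + - s1 / (rho ^ 2 - c1) + 2 * s1 * c1 / rho ^ 4) in *.
    set (U2 := s2 / (rho ^ 2 + c2) + - s2 / (rho ^ 2 - c2) + 2 * s2 * c2 / rho ^ 4) in *.
    set (U3 := s3 / (rho ^ 2 + c3) + - s3 / (rho ^ 2 - c3) + 2 * s3 * c3 / rho ^ 4) in *.
    set (kap := mu / (2 * PI)).
    assert (Hk0 : 0 <= kap) by (unfold kap; apply Rdiv_le_0_compat; pose proof PI_RGT_0; lra).
    assert (Hk1 : kap <= mu).
    { unfold kap. pose proof PI2_1. apply Rmult_le_reg_r with (2*PI). lra.
      field_simplify; nra. }
    set (S := U1 + U2 + U3 - (e1 + e2 + e3 + e4 + e5 + e6)).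
    set (D := d1 + d2 + d3 + d4 + d5 + d6).
    assert (Hs4 : 0 < rho ^ 4) by (apply pow_lt; lra).
    assert (EQ : mu * (s1 / (rho ^ 2 + c1) - e1) / (2 * PI) + d1 +
      (mu * (s2 / (rho ^ 2 + c2) - e2) / (2 * PI) + d2) +
      (mu * (s3 / (rho ^ 2 + c3) - e3) / (2 * PI) + d3) +
      (mu * (- s1 / (rho ^ 2 + - c1) - e4) / (2 * PI) + d4) +
      (mu * (- s2 / (rho ^ 2 + - c2) - e5) / (2 * PI) + d5) +
      (mu * (- s3 / (rho ^ 2 + - c3) - e6) / (2 * PI) + d6) = kap * S + D).
    { transitivity (kap * S + D - kap * (2 * (s1 * c1 + s2 * c2 + s3 * c3) / rho ^ 4)).
      - unfold kap, S, D, U1, U2, U3. unfold Rminus, Rdiv. ring.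
      - rewrite SC. unfold Rdiv. ring. }
    match goal with |- Rabs ?L * _ <= _ => replace L with (kap * S + D) by (first [exact (eq_sym EQ) | exact EQ]) end.
    pose proof (absb _ _ _ Hr3 T1). pose proof (absb _ _ _ Hr3 T2). pose proof (absb _ _ _ Hr3 T3).
    pose proof (absb _ _ _ Hr3 He1). pose proof (absb _ _ _ Hr3 He2). pose proof (absb _ _ _ Hr3 He3).
    pose proof (absb _ _ _ Hr3 He4). pose proof (absb _ _ _ Hr3 He5). pose proof (absb _ _ _ Hr3 He6).
    pose proof (absb _ _ _ Hr3 Hd1). pose proof (absb _ _ _ Hr3 Hd2). pose proof (absb _ _ _ Hr3 Hd3).
    pose proof (absb _ _ _ Hr3 Hd4). pose proof (absb _ _ _ Hr3 Hd5). pose proof (absb _ _ _ Hr3 Hd6).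
    assert (HS : -54 <= S * rho ^ 3 <= 54).
    { replace (S * rho ^ 3) with (U1 * rho^3 + U2 * rho^3 + U3 * rho^3 -
        (e1 * rho^3 + e2 * rho^3 + e3 * rho^3 + e4 * rho^3 + e5 * rho^3 + e6 * rho^3))
        by (unfold S; ring). lra. }
    assert (HD : -(48 * M) <= D * rho ^ 3 <= 48 * M).
    { replace (D * rho ^ 3) with (d1 * rho^3 + d2 * rho^3 + d3 * rho^3 +
        d4 * rho^3 + d5 * rho^3 + d6 * rho^3) by (unfold D; ring). lra. }
    assert (HkS : -(54 * kap) <= kap * (S * rho ^ 3) <= 54 * kap) by nra.
    rewrite <- (Rabs_pos_eq (rho ^ 3)) by lra. rewrite <- Rabs_mult.
    apply Rabs_le.
    replace ((kap * S + D) * rho ^ 3) with (kap * (S * rho ^ 3) + D * rho ^ 3) by ring.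
    lra.
Qed.


Theorem lemma4p4 (psi : R -> R) (Hpsi : potential psi) :
  (exists alpha, in_class yhat alpha) /\
  (forall alpha, in_class yhat alpha ->
     forall xi eta, bond xi eta -> -1/3 <= alpha xi eta <= 1/3) /\
  (exists C : R, forall xi, Lambda xi ->
     Rabs (force psi xi) <= C * / (enorm xi ^ 3)) /\
  (exists C1 t : R, t > 2 /\ forall xi, Lambda xi ->
     Rabs (force psi xi) <= C1 * Rpower (1 + enorm xi) (- t)).
Proof.
  split; [apply part1|]. split; [apply part2|].
  destruct (force_decay psi Hpsi) as [C [HC HF]].
  assert (Hb : forall xi, Lambda xi -> Rabs (force psi xi) <= C * / (enorm xi ^ 3)).
  { intros xi Hx. specialize (HF xi Hx).
    assert (0 < enorm xi ^ 3) by (apply pow_lt; apply Lambda_pos; auto).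
    apply Rmult_le_reg_r with (enorm xi ^ 3); auto.
    rewrite Rmult_assoc, Rinv_l, Rmult_1_r by lra. auto. }
  split; [exists C; auto|].
  exists (27 * C), 3. split; [lra|].
  intros xi Hx. specialize (Hb xi Hx).
  pose proof (Lambda_pos xi Hx) as Hp. pose proof (Lambda_norm xi Hx) as Hn.
  set (r := enorm xi) in *.
  assert (Hr : 1/2 <= r) by nra.
  replace (- (3)) with (- INR 3) by (simpl; ring).
  rewrite Rpower_Ropp, Rpower_pow by lra.
  eapply Rle_trans; [exact Hb|].
  assert (H3 : 0 < r ^ 3) by (apply pow_lt; lra).
  assert (H4 : 0 < (1 + r) ^ 3) by (apply pow_lt; lra).
  assert (H5 : (1 + r) ^ 3 <= 27 * r ^ 3).
  { replace (27 * r^3) with ((3*r)^3) by ring. apply pow_incr. lra. }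
  replace (27 * C * / (1 + r) ^ 3) with (C * (27 * / (1 + r) ^ 3)) by ring. apply Rmult_le_compat_l; auto.
  apply Rmult_le_reg_r with (r ^ 3); auto. rewrite Rinv_l by lra.
  apply Rmult_le_reg_r with ((1+r) ^ 3); auto.
  replace (27 * / (1 + r) ^ 3 * r ^ 3 * (1 + r) ^ 3) with (27 * r ^ 3) by (field; lra).
  lra.
Qed.
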